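(* Let $\mathbb{P}_\omega$ be a centred least-squares problem with $r<n$ in simplified form. If $\mathbb{P}_\omega$ admits an essentially perfect solution, then $B$ is indefinite (has both a positive and a negative eigenvalue).
   Context: For real symmetric $n\times n$ $A\neq O$ (positive semidefinite) and $B$, $t,b\in\mathbb{R}^n$, $k\in\mathbb{R}$, problem $\mathbb{P}_\omega$ minimises $L(x)=(x-t)^\top A(x-t)$ over the nonempty set $X=\{x:x^\top Bx+2b^\top x-k=0\}$, with $\underline L=\inf_XL$. Centred least-squares with $r<n$: $t=0$, $A=\operatorname{diag}(I_r,O_{n-r})$, $1\le r<n$. Simplified form: for some $0\le s_0\le n-r$ and nonsingular diagonal $s_0\times s_0$ $\Gamma_0$, $B=\begin{pmatrix}B_{11}&C_{10}&O\\C_{10}^\top&O_{n-r-s_0}&O\\O&O&\Gamma_0\end{pmatrix}$ (block sizes $r,n-r-s_0,s_0$; empty blocks absent). $\mathbb{P}_\omega$ admits an essentially perfect solution if $L(x)>0$ for all $x\in X$ but $\underline L=0$. *)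

(* Defs.v *)
From HB Require Import structures.
From mathcomp Require Import all_boot all_order all_algebra.
Set Implicit Arguments. Unset Strict Implicit. Unset Printing Implicit Defensive.
Import Order.TTheory GRing.Theory Num.Theory.
Local Open Scope ring_scope.

Section LS.
Variable R : rcfType.

Definition lsA (n r : nat) : 'M[R]_n :=
  \matrix_(i, j) ((((i == j) && (i < r)%N) : bool)%:R).

Definition qform (n : nat) (M : 'M[R]_n) (x y : 'cV[R]_n) : R :=
  (x^T *m M *m y) ord0 ord0.

Definition Lfun (n : nat) (A : 'M[R]_n) (t x : 'cV[R]_n) : R :=
  qform A (x - t) (x - t).

Definition Xset (n : nat) (B : 'M[R]_n) (b : 'cV[R]_n) (k : R) (x : 'cV[R]_n) : Prop :=
  qform B x x + 2 * (b^T *m x) ord0 ord0 - k = 0.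

Definition is_inf (n : nat) (S : 'cV[R]_n -> Prop) (f : 'cV[R]_n -> R) (l : R) : Prop :=
  (forall x, S x -> l <= f x) /\
  (forall l', (forall x, S x -> l' <= f x) -> l' <= l).

Definition essentially_perfect (n : nat) (A : 'M[R]_n) (t : 'cV[R]_n)
    (B : 'M[R]_n) (b : 'cV[R]_n) (k : R) : Prop :=
  (forall x, Xset B b k x -> 0 < Lfun A t x) /\ is_inf (Xset B b k) (Lfun A t) 0.

(* simplified form of B, with blocks of sizes r, m = n-r-s0, s0 *)
Definition simplB (r m s0 : nat) (B11 : 'M[R]_r) (C10 : 'M[R]_(r, m))
    (G0 : 'M[R]_s0) : 'M[R]_(r + m + s0) :=
  block_mx (block_mx B11 C10 C10^T 0) 0 0 G0.

Definition indefinite (n : nat) (B : 'M[R]_n) : Prop :=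
  (exists a : R, 0 < a /\ eigenvalue B a) /\ (exists a : R, a < 0 /\ eigenvalue B a).

End LS.

(* Main.v *)
Require Import Defs.
From HB Require Import structures.
From mathcomp Require Import all_boot all_order all_algebra.
From mathcomp Require Import sesquilinear spectral complex.
From mathcomp Require Import ring lra.
Import Order.TTheory GRing.Theory Num.Theory Num.Def.
Local Open Scope ring_scope.
Section Spec.
Local Open Scope sesquilinear_scope.
Local Open Scope complex_scope.
Local Open Scope ring_scope.
Lemma neg_eig (R : rcfType) n (M : 'M[R]_n) (x : 'cV[R]_n) : M^T = M ->
  (x^T *m M *m x) ord0 ord0 < 0 -> exists a, a < 0 /\ eigenvalue M a.
Proof.
move=> MT qx.
pose A : 'M[R[i]]_n := map_mx (real_complex R) M.
have AT : A ^t conjC = A.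
  apply/matrixP => i j; rewrite !mxE /=.
  have -> : M j i = M i j by rewrite -[in RHS]MT mxE.
  exact: conjc_real.
have Aherm : A \is hermsymmx.
  by apply/is_hermitianmxP; rewrite expr0 scale1r AT.
have /orthomx_spectralP Aeq := hermitian_normalmx Aherm.
have dreal := hermitian_spectral_diag_real Aherm.
set P := spectralmx A in Aeq.
set d := spectral_diag A in Aeq dreal.
have Pu : P \is unitarymx by apply: spectral_unitarymx.
have Punit : P \in unitmx by apply: spectral_unit.
have PA : P *m A = diag_mx d *m P.
  by rewrite {1}Aeq !mulmxA mulmxV // mul1mx.
pose y : 'rV[R[i]]_n := (map_mx (real_complex R) x)^T.
have yc : y ^t conjC = map_mx (real_complex R) x.
  by apply/matrixP => i j; rewrite !mxE; exact: conjc_real.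
have qy : (y *m A *m y ^t conjC) ord0 ord0 = ((x^T *m M *m x) ord0 ord0)%:C.
  by rewrite yc /y map_trmx -!map_mxM mxE.
pose z := y *m P ^t conjC.
have zc : z ^t conjC = P *m y ^t conjC.
  by rewrite /z trmx_mul map_mxM trmxCK.
have qz : (y *m A *m y ^t conjC) ord0 ord0 =
    \sum_i z ord0 i * d ord0 i * (z ord0 i)^*.
  rewrite Aeq invmx_unitary // -/z !mulmxA -[_ *m P *m _]mulmxA -zc.
  rewrite mxE; apply: eq_bigr => i _; rewrite mul_mx_diag !mxE.
  done.
have [i di] : exists i, d ord0 i < 0.
  apply/existsPP => [j|]. exact: idP.
  apply: contraT; rewrite negb_exists => /forallP H.
  have : 0 <= (y *m A *m y ^t conjC) ord0 ord0.
    rewrite qz; apply: sumr_ge0 => j _.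
    rewrite mulrAC -normCK; apply: mulr_ge0; first exact: exprn_ge0.
    have /mxOverP/(_ ord0 j) dr := dreal.
    by move: (H j); rewrite real_ltNge // ?real0 // negbK.
  by rewrite qy lecE /= => /andP[_]; rewrite leNgt qx.
have ev : eigenvalue A (d ord0 i).
  apply/eigenvalueP; exists (row i P).
    by rewrite -row_mul PA mul_diag_mx; apply/rowP => j; rewrite !mxE.
  apply/negP => /eqP r0.
  have := congr1 (mulmx^~ (invmx P)) r0.
  rewrite -row_mul mulmxV // mul0mx => /rowP/(_ i).
  by rewrite !mxE eqxx /= => /eqP; rewrite oner_eq0.
have /mxOverP/(_ ord0 i) dr := dreal.
have da : (@complex.Re R (d ord0 i))%:C = d ord0 i by rewrite complexRe; apply/Creal_ReP.
exists (@complex.Re R (d ord0 i)); split.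
  by move: di; rewrite -da ltcE /= => /andP[].
rewrite eigenvalue_root_char -(fmorph_root (real_complex R)).
rewrite map_char_poly.
by move: ev; rewrite eigenvalue_root_char -da.
Qed.

End Spec.

Section Aux.
Variable R : rcfType.

Lemma qformE n (M : 'M[R]_n) x y :
  qform M x y = \sum_j \sum_i x i ord0 * M i j * y j ord0.
Proof.
rewrite /qform mxE; apply: eq_bigr => j _; rewrite mxE big_distrl.
by apply: eq_bigr => i _; rewrite !mxE.
Qed.

Lemma dotE n (a u : 'cV[R]_n) : (a^T *m u) ord0 ord0 = \sum_i a i ord0 * u i ord0.
Proof. by rewrite mxE; apply: eq_bigr => i _; rewrite !mxE. Qed.

Lemma qform_simplB r m s0 (B11 : 'M[R]_r) (C : 'M[R]_(r, m)) (G : 'M[R]_s0) u v w :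
  qform (simplB B11 C G) (col_mx (col_mx u v) w) (col_mx (col_mx u v) w) =
  qform B11 u u + 2 * (u^T *m C *m v) ord0 ord0 + qform G w w.
Proof.
rewrite /qform /simplB !tr_col_mx mul_row_block !mul_row_col ?mulmx0 ?mul0mx.
rewrite addr0 add0r !mul_mx_row add_row_mx mul_row_col mulmx0 addr0 !mulmxDl.
have -> : v^T *m C^T *m u = (u^T *m C *m v)^T by rewrite !trmx_mul trmxK mulmxA.
rewrite !mxE; ring.
Qed.

Lemma dot_col r m s0 (b1 u : 'cV[R]_r) (b2 v : 'cV[R]_m) (b3 w : 'cV[R]_s0) :
  ((col_mx (col_mx b1 b2) b3)^T *m col_mx (col_mx u v) w) ord0 ord0 =
  (b1^T *m u) ord0 ord0 + (b2^T *m v) ord0 ord0 + (b3^T *m w) ord0 ord0.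
Proof. by rewrite !tr_col_mx !mul_row_col !mxE. Qed.

Lemma L_lsA r m s0 u (v : 'cV[R]_m) (w : 'cV[R]_s0) :
  Lfun (lsA R (r + m + s0) r) 0 (col_mx (col_mx u v) w) = \sum_i u i ord0 ^+ 2.
Proof.
rewrite /Lfun subr0 qformE.
have E : forall j : 'I_(r + m + s0),
   \sum_i col_mx (col_mx u v) w i ord0 * lsA R (r + m + s0) r i j * col_mx (col_mx u v) w j ord0
   = (j < r)%:R * col_mx (col_mx u v) w j ord0 ^+ 2.
  move=> j; rewrite (bigD1 j) //= big1 ?addr0.
    by rewrite !mxE eqxx /= mulrC mulrA expr2 mulrC.
  by move=> i /negPf ij; rewrite !mxE ij /= mulr0 mul0r.
rewrite (eq_bigr _ (fun j _ => E j)) big_split_ord /= [X in _ + X]big1 ?addr0; last first.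
  move=> i _; rewrite /=.
  have -> : (r + m + i < r)%N = false by apply/negbTE; rewrite -leqNgt -addnA leq_addr.
  by rewrite mul0r.
rewrite big_split_ord /= [X in _ + X]big1 ?addr0; last first.
  move=> i _; rewrite /=.
  have -> : (r + i < r)%N = false by apply/negbTE; rewrite -leqNgt leq_addr.
  by rewrite mul0r.
by apply: eq_bigr => i _; rewrite !col_mxEu /= ltn_ord mul1r.
Qed.
Lemma small_f r (B : 'M[R]_r) (b1 : 'cV[R]_r) (D : R) : 0 < D ->
  exists e, 0 < e /\ forall u : 'cV_r, \sum_i u i ord0 ^+ 2 < e ->
    `|qform B u u + 2 * (b1^T *m u) ord0 ord0| < D.
Proof.
move=> D0.
pose S1 := \sum_j \sum_i `|B i j|.
pose S2 := \sum_i `|b1 i ord0|.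
have S10 : 0 <= S1 by apply: sumr_ge0 => j _; apply: sumr_ge0 => i _.
have S20 : 0 <= S2 by apply: sumr_ge0 => i _.
pose K := S1 + 2 * S2 + 1.
have K0 : 0 < K by rewrite /K; lra.
pose e0 := D / (K + D).
have KD0 : 0 < K + D by lra.
have e00 : 0 < e0 by rewrite /e0 divr_gt0.
have e01 : e0 < 1 by rewrite /e0 ltr_pdivrMr // mul1r; lra.
have Ke0 : K * e0 < D.
  by rewrite /e0 mulrA ltr_pdivrMr // mulrC ltr_pM2l //; lra.
exists (e0 ^+ 2); split; first by rewrite exprn_gt0.
move=> u Lu.
set L := \sum_i u i ord0 ^+ 2 in Lu.
have L0 : 0 <= L by apply: sumr_ge0 => i _; apply: sqr_ge0.
pose s := Num.sqrt L.
have s0 : 0 <= s := sqrtr_ge0 _.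
have se : s < e0.
  have -> : e0 = Num.sqrt (e0 ^+ 2) by rewrite sqrtr_sqr gtr0_norm.
  by rewrite ltr_sqrt // exprn_gt0.
have ui : forall i, `|u i ord0| <= s.
  move=> i; rewrite -sqrtr_sqr ler_sqrt //.
  by rewrite /L (bigD1 i) //= lerDl; apply: sumr_ge0 => j _; apply: sqr_ge0.
have ss : s * s <= s by rewrite ler_piMl //; lra.
have H1 : `|qform B u u| <= S1 * s.
  rewrite qformE; apply: (le_trans (ler_norm_sum _ _ _)).
  rewrite /S1 mulr_suml; apply: ler_sum => j _.
  apply: (le_trans (ler_norm_sum _ _ _)).
  rewrite mulr_suml; apply: ler_sum => i _.
  rewrite !normrM mulrAC mulrC ler_wpM2l //.
  apply: le_trans ss; apply: ler_pM => //; exact: ui.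
have H2 : `|2 * (b1^T *m u) ord0 ord0| <= 2 * S2 * s.
  rewrite normrM -mulrA ger0_norm // ler_wpM2l // dotE.
  apply: (le_trans (ler_norm_sum _ _ _)).
  rewrite /S2 mulr_suml; apply: ler_sum => i _.
  by rewrite normrM ler_wpM2l.
apply: (le_lt_trans (ler_normD _ _)).
apply: (le_lt_trans (lerD H1 H2)).
apply: (le_lt_trans _ Ke0).
have : K * s <= K * e0 by rewrite ler_wpM2l //; lra.
rewrite /K; nra.
Qed.

Lemma qdelta n p (A : 'M[R]_(n, p)) a b i j :
  ((a *: delta_mx i (@ord0 0))^T *m A *m (b *: delta_mx j (@ord0 0))) ord0 ord0 = a * b * A i j.
Proof.
rewrite [(a *: _)^T]linearZ /= trmx_delta -!scalemxAl -scalemxAr -rowE -colE !mxE.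
by rewrite mulrA.
Qed.

Lemma ddelta n (c : 'cV[R]_n) a j :
  (c^T *m (a *: delta_mx j (@ord0 0))) ord0 ord0 = a * c j ord0.
Proof. by rewrite -scalemxAr -colE !mxE. Qed.

Lemma diag_props s0 (G : 'M[R]_s0) : is_diag_mx G -> G \in unitmx ->
  [/\ G^T = G, forall j, G j j != 0 &
      forall w, qform G w w = \sum_j G j j * w j ord0 ^+ 2].
Proof.
move=> /is_diag_mxP Gd Gu; split.
- apply/matrixP => i j; rewrite mxE; case: (eqVneq i j) => [->//|ne].
  by rewrite !Gd // eq_sym.
- move=> j; apply/negP => /eqP g0.
  have r0 : row j G = 0.
    apply/rowP => l; rewrite !mxE; case: (eqVneq j l) => [<-//|ne].
    exact: Gd.
  have := congr1 (mulmx^~ (invmx G)) r0.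
  rewrite -row_mul mulmxV // mul0mx => /rowP/(_ j).
  by rewrite !mxE eqxx /= => /eqP; rewrite oner_eq0.
- move=> w; rewrite qformE; apply: eq_bigr => j _.
  rewrite (bigD1 j) //= big1 ?addr0; first by rewrite mulrC mulrA expr2 mulrC.
  by move=> i ij; rewrite Gd ?mulr0 ?mul0r.
Qed.

Lemma indef_of_form n (M : 'M[R]_n) x y : M^T = M ->
  qform M x x < 0 -> 0 < qform M y y -> indefinite M.
Proof.
move=> MT qx qy; split; last exact: (@neg_eig R n M x MT qx).
have NT : (- M)^T = - M by rewrite linearN /= MT.
have Nq : (y^T *m (- M) *m y) ord0 ord0 < 0.
  by rewrite mulmxN mulNmx mxE /= oppr_lt0.
have [a [a0 ev]] := @neg_eig R n (- M) y NT Nq.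
exists (- a); split; first by rewrite oppr_gt0.
move/eigenvalueP: ev => [v vM vn0]; apply/eigenvalueP; exists v => //.
by apply: oppr_inj; rewrite -mulmxN vM scaleNr opprK.
Qed.

Lemma sign_choice (a c : R) : c != 0 ->
  (exists t, t * t * a + 2 * (t * 1 * c) < 0) /\
  (exists t, 0 < t * t * a + 2 * (t * 1 * c)).
Proof.
move=> c0.
pose p := `|a| + 1.
have p0 : 0 < p by rewrite /p; have := normr_ge0 a; lra.
have q1 : a / p < 1 by rewrite ltr_pdivrMr // mul1r /p; have := ler_norm a; lra.
have q2 : -1 < a / p by rewrite ltr_pdivlMr // mulN1r /p; have := ler_normr a; have := ler_norm (- a); rewrite normrN; lra.
have cc : 0 < c ^+ 2 / p by rewrite divr_gt0 // lt0r sqrf_eq0 c0 sqr_ge0.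
split.
- exists (- c / p).
  have -> : - c / p * (- c / p) * a + 2 * (- c / p * 1 * c) = c ^+ 2 / p * (a / p - 2).
    by field; rewrite gt_eqF.
  by rewrite pmulr_rlt0 //; lra.
- exists (c / p).
  have -> : c / p * (c / p) * a + 2 * (c / p * 1 * c) = c ^+ 2 / p * (a / p + 2).
    by field; rewrite gt_eqF.
  by rewrite pmulr_rgt0 //; lra.
Qed.

Lemma indef_C r m s0 (B11 : 'M[R]_r) (C : 'M[R]_(r, m)) (G : 'M[R]_s0) :
  B11^T = B11 -> G^T = G -> C != 0 -> indefinite (simplB B11 C G).
Proof.
move=> BT GT Cn0.
have [[i j] /= cij] : exists p : 'I_r * 'I_m, C p.1 p.2 != 0.
  apply/existsP; apply: contraNT Cn0 => /existsPn H.
  by apply/eqP/matrixP => i j; rewrite mxE; move: (H (i, j)); rewrite negbK => /eqP.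
have ST : (simplB B11 C G)^T = simplB B11 C G.
  by rewrite /simplB !tr_block_mx BT GT trmxK !trmx0.
have val : forall t, qform (simplB B11 C G)
    (col_mx (col_mx (t *: delta_mx i (@ord0 0)) (1 *: delta_mx j (@ord0 0))) 0)
    (col_mx (col_mx (t *: delta_mx i (@ord0 0)) (1 *: delta_mx j (@ord0 0))) 0) =
    t * t * B11 i i + 2 * (t * 1 * C i j).
  move=> t; rewrite qform_simplB /qform !qdelta.
  by rewrite trmx0 !mul0mx mxE addr0.
have [[t1 H1] [t2 H2]] := @sign_choice (B11 i i) (C i j) cij.
pose X t := col_mx (col_mx (t *: delta_mx i (@ord0 0)) (1 *: delta_mx j (@ord0 0))) (0 : 'cV[R]_s0).
apply: (@indef_of_form _ (simplB B11 C G) (X t1) (X t2) ST); rewrite /X val //.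
Qed.

Lemma no_ep r m s0 (B11 : 'M[R]_r) (G : 'M[R]_s0) (b1 : 'cV[R]_r)
    (b2 : 'cV[R]_m) (b3 : 'cV[R]_s0) k :
  is_diag_mx G -> G \in unitmx ->
  essentially_perfect (lsA R (r + m + s0) r) 0 (simplB B11 0 G)
    (col_mx (col_mx b1 b2) b3) k -> False.
Proof.
move=> Gd Gu [Hpos [_ Hglb]].
have [_ gnz qG] := diag_props _ _ Gd Gu.
have XV : forall u v w,
    qform (simplB B11 0 G) (col_mx (col_mx u v) w) (col_mx (col_mx u v) w)
    + 2 * ((col_mx (col_mx b1 b2) b3)^T *m col_mx (col_mx u v) w) ord0 ord0 - k
  = (qform B11 u u + 2 * (b1^T *m u) ord0 ord0) +
    (qform G w w + 2 * (b2^T *m v) ord0 ord0 + 2 * (b3^T *m w) ord0 ord0 - k).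
  move=> u v w; rewrite qform_simplB dot_col.
  have -> : (u^T *m 0 *m v) ord0 ord0 = 0 by rewrite mulmx0 mul0mx mxE.
  ring.
have h0 : forall (v : 'cV[R]_m) (w : 'cV[R]_s0),
    qform G w w + 2 * (b2^T *m v) ord0 ord0 + 2 * (b3^T *m w) ord0 ord0 - k != 0.
  move=> v w; apply/eqP => h.
  have := Hpos (col_mx (col_mx 0 v) w).
  rewrite L_lsA big1 ?ltxx; last by move=> i _; rewrite mxE expr0n.
  move=> H; suff : false by []; apply: H; rewrite /Xset XV h.
  have -> : qform B11 0 0 = 0 by rewrite /qform mulmx0 mxE.
  by rewrite mulmx0 mxE mulr0 !addr0.
have b20 : b2 = 0.
  apply/matrixP => j z; rewrite ord1 [RHS]mxE; apply/eqP; apply: contraT => nz.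
  have := h0 ((k / (2 * b2 j ord0)) *: delta_mx j (@ord0 0)) 0.
  have E : qform G 0 0 + 2 * (k / (2 * b2 j ord0) * b2 j ord0)
      + 2 * (b3^T *m (0 : 'cV[R]_s0)) ord0 ord0 - k = 0.
    rewrite /qform !mulmx0 !mxE; field.
    exact: nz.
  by rewrite ddelta E eqxx.
subst b2.
pose hw (w : 'cV[R]_s0) := qform G w w + 2 * (b3^T *m w) ord0 ord0 - k.
have h1 : forall w, hw w != 0.
  move=> w; have := h0 0 w; rewrite /hw trmx0 mul0mx mxE mulr0 addr0; exact.
pose k' := k + \sum_j b3 j ord0 ^+ 2 / G j j.
have hid : forall w, hw w = \sum_j G j j * (w j ord0 + b3 j ord0 / G j j) ^+ 2 - k'.
  move=> w; rewrite /hw qG dotE /k'.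
  have -> : \sum_j G j j * (w j ord0 + b3 j ord0 / G j j) ^+ 2 =
     \sum_j G j j * w j ord0 ^+ 2 + 2 * \sum_j b3 j ord0 * w j ord0
     + \sum_j b3 j ord0 ^+ 2 / G j j.
    rewrite mulr_sumr -!big_split; apply: eq_bigr => j _ /=; field; exact: gnz.
  ring.
have k'0 : k' != 0.
  apply/negP => /eqP kz; have := h1 (\col_j (- (b3 j ord0 / G j j))).
  rewrite hid kz subr0 big1 ?eqxx //.
  by move=> j _; rewrite mxE addNr expr0n mulr0.
have sgn : forall j, G j j * k' < 0.
  move=> j; rewrite ltNge; apply/negP => H.
  have gk : 0 < G j j * k' by rewrite lt0r mulf_neq0 ?gnz.
  have pos : 0 < k' / G j j.
    have -> : k' / G j j = (G j j * k') / (G j j ^+ 2) by field; exact: gnz.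
    by rewrite divr_gt0 // lt0r sqrf_eq0 gnz sqr_ge0.
  pose t := Num.sqrt (k' / G j j).
  have := h1 (\col_l ((l == j)%:R * t - b3 l ord0 / G l l)).
  rewrite hid (bigD1 j) //= big1 ?addr0.
    rewrite !mxE eqxx mul1r subrK sqr_sqrtr ?ltW // mulrC divfK ?gnz //.
    by rewrite subrr eqxx.
  by move=> l lj; rewrite !mxE (negPf lj) mul0r sub0r addNr expr0n mulr0.
have lb : forall w, `|k'| <= `|hw w|.
  move=> w; rewrite hid.
  set Sm := \sum_j _.
  have kS : k' * Sm <= 0.
    rewrite /Sm mulr_sumr; apply: sumr_le0 => j _.
    rewrite mulrA [k' * _]mulrC; apply: mulr_le0_ge0; last exact: sqr_ge0.
    exact: ltW.
  case: (ltgtP k' 0) => [kn|kp|kz]; last by rewrite kz eqxx in k'0.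
  - rewrite ltr0_norm // ler_normr; apply/orP; left; nra.
  - rewrite gtr0_norm // ler_normr; apply/orP; right; nra.
have nk : 0 < `|k'| by rewrite normr_gt0.
have [e [e0 He]] := small_f _ B11 b1 _ nk.
have : e <= 0.
  apply: Hglb => x; have [u [v [w ->]]] : exists u v w, x = col_mx (col_mx u v) w.
    by exists (usubmx (usubmx x)), (dsubmx (usubmx x)), (dsubmx x); rewrite !vsubmxK.
  move=> Xx; rewrite L_lsA leNgt; apply/negP => Lt.
  have := He u Lt.
  move: Xx; rewrite /Xset XV trmx0 mul0mx (_ : (0 : 'M[R]_1) ord0 ord0 = 0) ?mxE // mulr0 addr0 -/(hw w).
  move=> /eqP; rewrite addr_eq0 => /eqP ->; rewrite normrN.
  move=> H; have := lb w; rewrite /hw mxE leNgt H; exact.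
by rewrite leNgt e0.
Qed.

End Aux.

Theorem corollary5p1 (R : rcfType) (r m s0 : nat)
    (B11 : 'M[R]_r) (C10 : 'M[R]_(r, m)) (G0 : 'M[R]_s0)
    (b : 'cV[R]_(r + m + s0)) (k : R) :
  (1 <= r)%N -> (0 < m + s0)%N ->
  B11^T = B11 ->
  is_diag_mx G0 -> G0 \in unitmx ->
  (exists x, Xset (simplB B11 C10 G0) b k x) ->
  essentially_perfect (lsA R (r + m + s0) r) 0 (simplB B11 C10 G0) b k ->
  indefinite (simplB B11 C10 G0).
Proof.
move=> _ _ BT Gd Gu _ Hep.
have [GT _ _] := @diag_props R _ _ Gd Gu.
case: (eqVneq C10 0) => [C0|Cn0]; last exact: indef_C.
exfalso; move: Hep; rewrite C0.
have [b1 [b2 [b3 ->]]] : exists b1 b2 b3, b = col_mx (col_mx b1 b2) b3.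
  by exists (usubmx (usubmx b)), (dsubmx (usubmx b)), (dsubmx b); rewrite !vsubmxK.
exact: (@no_ep R _ _ _ _ G0 b1 b2 b3 k Gd Gu).
Qed.
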